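(* Let $\mathcal{C}$ be a subsystem of a TRS $\mathcal{R}$. If $\ell\leftrightarrow^*_\mathcal{C}r$ for every rule $\ell\to r\in\mathcal{R}\setminus\mathcal{C}$, then $t\leftrightarrow^*_\mathcal{C}u$ for every parallel critical pair $(t,u)$ between $\mathcal{R}$ and $\mathcal{R}$.
   Context: A TRS is a set of rules $\ell\to r$ ($\ell\notin\mathcal{V}$, $\mathcal{V}ar(r)\subseteq\mathcal{V}ar(\ell)$); $\leftrightarrow^*_\mathcal{C}$ is the reflexive-transitive-symmetric closure of $\to_\mathcal{C}$. Parallel critical pair between $\mathcal{R}$ and $\mathcal{R}$: for variants (renamings) $\ell\to r$ and $\ell_p\to r_p$ ($p\in P$) of $\mathcal{R}$-rules, pairwise variable-disjoint, where $P$ is a non-empty set of pairwise parallel function-symbol positions of $\ell$, $\sigma$ a most general unifier of $\{\ell_p\approx\ell|_p\}_{p\in P}$, and $\ell_\epsilon\to r_\epsilon$ not a variant of $\ell\to r$ if $P=\{\epsilon\}$: the pair $((\ell\sigma)[r_p\sigma]_{p\in P}, r\sigma)$. *)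

(* Defs.v *)
From Stdlib Require Import List Relations Arith.
Import ListNotations.
Set Implicit Arguments.

Inductive term (F V : Type) : Type :=
| Var : V -> term F V
| Fun : F -> list (term F V) -> term F V.
Arguments Var {F V} _.
Arguments Fun {F V} _ _.

Fixpoint subst {F V : Type} (sigma : V -> term F V) (t : term F V) : term F V :=
  match t with
  | Var x => sigma x
  | Fun f ts => Fun f (map (subst sigma) ts)
  end.

Fixpoint vars {F V : Type} (t : term F V) : list V :=
  match t with
  | Var x => [x]
  | Fun _ ts => flat_map vars ts
  end.

(* Positions are sequences of (0-based) argument indices; [] is the root ε. *)
Definition pos := list nat.

Fixpoint subterm_at {F V : Type} (t : term F V) (p : pos) : option (term F V) :=
  match p with
  | [] => Some t
  | i :: p' =>
      match t with
      | Var _ => None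
      | Fun _ ts =>
          match nth_error ts i with
          | Some ti => subterm_at ti p'
          | None => None
          end
      end
  end.

(* t[s]_p  (returns t unchanged if p is not a position of t) *)
Fixpoint replace_at {F V : Type} (t : term F V) (p : pos) (s : term F V) : term F V :=
  match p with
  | [] => s
  | i :: p' =>
      match t with
      | Var _ => t
      | Fun f ts =>
          if i <? length ts
          then Fun f (firstn i ts ++ replace_at (nth i ts t) p' s :: skipn (S i) ts)
          else t
      end
  end.

Definition prefix (p q : pos) : Prop := exists r, q = p ++ r.
Definition parallel (p q : pos) : Prop := ~ prefix p q /\ ~ prefix q p.

Definition fun_pos {F V : Type} (t : term F V) (p : pos) : Prop :=
  exists f ts, subterm_at t p = Some (Fun f ts).

Definition rule (F V : Type) := (term F V * term F V)%type.
Definition trs (F V : Type) := rule F V -> Prop.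

Definition is_trs {F V : Type} (R : trs F V) : Prop :=
  forall l r, R (l, r) -> (forall x, l <> Var x) /\ incl (vars r) (vars l).

Definition subsystem {F V : Type} (C R : trs F V) : Prop :=
  forall rl, C rl -> R rl.

Inductive rstep {F V : Type} (C : trs F V) : term F V -> term F V -> Prop :=
| rstep_root : forall l r (sigma : V -> term F V),
    C (l, r) -> rstep C (subst sigma l) (subst sigma r)
| rstep_ctx : forall f ts1 ts2 s t,
    rstep C s t -> rstep C (Fun f (ts1 ++ s :: ts2)) (Fun f (ts1 ++ t :: ts2)).

Definition conv {F V : Type} (C : trs F V) : relation (term F V) :=
  clos_refl_sym_trans (term F V) (rstep C).

Definition variant {F V : Type} (rl' rl : rule F V) : Prop :=
  exists (rho rho' : V -> V),
    (forall x, rho' (rho x) = x) /\ (forall x, rho (rho' x) = x) /\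
    fst rl' = subst (fun x => Var (rho x)) (fst rl) /\
    snd rl' = subst (fun x => Var (rho x)) (snd rl).

Definition variant_of {F V : Type} (R : trs F V) (rl' : rule F V) : Prop :=
  exists rl, R rl /\ variant rl' rl.

Definition rule_vars {F V : Type} (rl : rule F V) : list V :=
  vars (fst rl) ++ vars (snd rl).

Definition var_disjoint {F V : Type} (rl1 rl2 : rule F V) : Prop :=
  forall x, In x (rule_vars rl1) -> ~ In x (rule_vars rl2).

Definition is_mgu {F V : Type} (U : (V -> term F V) -> Prop) (sigma : V -> term F V) : Prop :=
  U sigma /\ forall tau, U tau -> exists delta, forall x, tau x = subst delta (sigma x).

(* Parallel critical pair between R and R.
   The family {ℓ_p → r_p}_{p∈P} is given as a list Ps of pairs (p, (ℓ_p, r_p))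
   with pairwise distinct positions p. *)
Definition parallel_critical_pair {F V : Type} (R : trs F V) (t u : term F V) : Prop :=
  exists (l r : term F V) (Ps : list (pos * rule F V)) (sigma : V -> term F V),
    variant_of R (l, r) /\
    Ps <> [] /\
    NoDup (map fst Ps) /\
    (forall p rl, In (p, rl) Ps -> variant_of R rl /\ fun_pos l p) /\
    (forall p q, In p (map fst Ps) -> In q (map fst Ps) -> p <> q -> parallel p q) /\
    (forall p rl, In (p, rl) Ps -> var_disjoint rl (l, r)) /\
    (forall p rl q rl', In (p, rl) Ps -> In (q, rl') Ps -> p <> q -> var_disjoint rl rl') /\
    is_mgu (fun tau => forall p lp rp s, In (p, (lp, rp)) Ps ->
                         subterm_at l p = Some s -> subst tau lp = subst tau s) sigma /\
    (map fst Ps = [[]] -> forall rl, In ([], rl) Ps -> ~ variant rl (l, r)) /\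
    t = fold_left (fun acc (e : pos * rule F V) =>
                     replace_at acc (fst e) (subst sigma (snd (snd e)))) Ps (subst sigma l) /\
    u = subst sigma r.

(* Main.v *)
Require Import Defs.
From Stdlib Require Import List Relations Arith Lia Classical.
Import ListNotations.

Section S.
Context {F V : Type}.

Fixpoint term_ind2 (P : term F V -> Prop)
  (HV : forall x, P (Var x))
  (HF : forall f ts, Forall P ts -> P (Fun f ts)) (t : term F V) : P t :=
  match t with
  | Var x => HV x
  | Fun f ts => HF f ts ((fix go (l : list (term F V)) : Forall P l :=
       match l with
       | [] => Forall_nil _
       | a :: l' => Forall_cons _ (term_ind2 P HV HF a) (go l')
       end) ts)
  end.

Lemma subst_subst (sigma tau : V -> term F V) t :
  subst tau (subst sigma t) = subst (fun x => subst tau (sigma x)) t.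
Proof.
  induction t using term_ind2; simpl; auto.
  f_equal. rewrite map_map. apply map_ext_in. intros a Ha.
  rewrite Forall_forall in H. auto.
Qed.

Lemma subst_var (t : term F V) : subst Var t = t.
Proof.
  induction t using term_ind2; simpl; auto.
  f_equal. rewrite <- (map_id ts) at 2. apply map_ext_in. intros a Ha.
  rewrite Forall_forall in H. auto.
Qed.

Variable C : trs F V.

Lemma conv_ctx f ts1 ts2 a b : conv C a b ->
  conv C (Fun f (ts1 ++ a :: ts2)) (Fun f (ts1 ++ b :: ts2)).
Proof.
  induction 1.
  - apply rst_step. constructor. auto.
  - apply rst_refl.
  - apply rst_sym; auto.
  - eapply rst_trans; eauto.
Qed.

Lemma rstep_subst (tau : V -> term F V) a b : rstep C a b -> rstep C (subst tau a) (subst tau b).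
Proof.
  induction 1.
  - rewrite !subst_subst. constructor. auto.
  - simpl. rewrite !map_app. simpl. constructor. auto.
Qed.

Lemma conv_subst (tau : V -> term F V) a b : conv C a b -> conv C (subst tau a) (subst tau b).
Proof.
  induction 1.
  - apply rst_step. apply rstep_subst; auto.
  - apply rst_refl.
  - apply rst_sym; auto.
  - eapply rst_trans; eauto.
Qed.

Lemma subterm_subst (sigma : V -> term F V) p : forall t s, subterm_at t p = Some s ->
  subterm_at (subst sigma t) p = Some (subst sigma s).
Proof.
  induction p as [|i p IH]; intros t s H; simpl in *.
  - congruence.
  - destruct t as [x|f ts]; [discriminate|]. simpl.
    rewrite nth_error_map. destruct (nth_error ts i) eqn:E; [|discriminate].
    simpl. apply IH; auto.
Qed.

Lemma split_nth (ts : list (term F V)) i ti d : nth_error ts i = Some ti ->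
  ts = firstn i ts ++ ti :: skipn (S i) ts /\ i < length ts /\ nth i ts d = ti.
Proof.
  revert i. induction ts as [|x ts IH]; intros [|i] H; simpl in *; try discriminate.
  - inversion H; subst. split; auto. split; [lia|auto].
  - destruct (IH i H) as [H1 [H2 H3]]. split; [f_equal; auto|]. split; [lia|auto].
Qed.

Lemma conv_replace (p : pos) : forall s a b, subterm_at s p = Some a -> conv C a b ->
  conv C s (replace_at s p b).
Proof.
  induction p as [|i p IH]; intros s a b H Hc; simpl in *.
  - inversion H; subst; auto.
  - destruct s as [x|f ts]; [discriminate|].
    destruct (nth_error ts i) eqn:E; [|discriminate].
    destruct (split_nth ts i t (Fun f ts) E) as [H1 [H2 H3]].
    apply Nat.ltb_lt in H2. rewrite H2, H3.
    rewrite H1 at 1. apply conv_ctx. eapply IH; eauto.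
Qed.

Lemma nth_error_replace_other (ts : list (term F V)) i j x : i <> j -> i < length ts ->
  nth_error (firstn i ts ++ x :: skipn (S i) ts) j = nth_error ts j.
Proof.
  revert i j. induction ts as [|y ts IH]; intros [|i] [|j] Hij Hl; simpl in *; try lia; auto.
  apply IH; lia.
Qed.

Lemma nth_error_replace_same (ts : list (term F V)) i x : i < length ts ->
  nth_error (firstn i ts ++ x :: skipn (S i) ts) i = Some x.
Proof.
  revert i. induction ts as [|y ts IH]; intros [|i] Hl; simpl in *; try lia; auto.
  apply IH; lia.
Qed.

Lemma subterm_replace_parallel p : forall q (t b s : term F V), parallel p q ->
  subterm_at t q = Some s -> subterm_at (replace_at t p b) q = Some s.
Proof.
  induction p as [|i p IH]; intros q t b s Hpar H.
  - exfalso. apply (proj1 Hpar). exists q. reflexivity.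
  - destruct q as [|j q].
    + exfalso. apply (proj2 Hpar). exists (i :: p). reflexivity.
    + simpl in *. destruct t as [x|f ts]; [discriminate|].
      destruct (i <? length ts) eqn:Hl; [|simpl; exact H].
      apply Nat.ltb_lt in Hl. simpl.
      destruct (Nat.eq_dec i j) as [->|Hne].
      * rewrite nth_error_replace_same by auto.
        destruct (nth_error ts j) eqn:E; [|discriminate].
        destruct (split_nth ts j _ (Fun f ts) E) as [_ [_ H3]]. rewrite H3.
        apply IH; auto. split.
        -- intros [r Hr]. apply (proj1 Hpar). exists r. simpl. congruence.
        -- intros [r Hr]. apply (proj2 Hpar). exists r. simpl. congruence.
      * rewrite nth_error_replace_other by auto. exact H.
Qed.

Lemma fold_conv (sigma : V -> term F V) (L : list (pos * rule F V)) : forall acc,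
  NoDup (map fst L) ->
  (forall p q, In p (map fst L) -> In q (map fst L) -> p <> q -> parallel p q) ->
  (forall p rl, In (p, rl) L -> exists a, subterm_at acc p = Some a /\ conv C a (subst sigma (snd rl))) ->
  conv C acc (fold_left (fun acc (e : pos * rule F V) =>
                     replace_at acc (fst e) (subst sigma (snd (snd e)))) L acc).
Proof.
  induction L as [|[p0 rl0] L IH]; intros acc Hnd Hpar Hinv; simpl.
  - apply rst_refl.
  - simpl in Hnd. inversion Hnd; subst.
    destruct (Hinv p0 rl0 (or_introl eq_refl)) as [a [Ha Hc]].
    eapply rst_trans. eapply conv_replace; eauto.
    apply IH; auto.
    + intros. apply Hpar; simpl; auto.
    + intros p rl Hin. destruct (Hinv p rl (or_intror Hin)) as [a' [Ha' Hc']].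
      exists a'. split; auto. apply subterm_replace_parallel; auto.
      apply (in_map fst) in Hin. simpl in Hin.
      apply Hpar; simpl; auto.
      intro; subst. apply H1. auto.
Qed.

End S.

Theorem mainTheorem14 (F V : Type) (R C : trs F V) :
  is_trs R -> subsystem C R ->
  (forall l r, R (l, r) -> ~ C (l, r) -> conv C l r) ->
  forall t u, parallel_critical_pair R t u -> conv C t u.
Proof.
  intros _ _ HRC.
  assert (HR : forall l r, variant_of R (l, r) -> conv C l r).
  { intros l r [[l0 r0] [Hin [rho [rho' [_ [_ [E1 E2]]]]]]]. simpl in *. subst.
    apply conv_subst.
    destruct (classic (C (l0, r0))) as [Hc|Hc].
    - apply rst_step. rewrite <- (subst_var l0), <- (subst_var r0).
      constructor. auto.
    - auto. }
  intros t u [l [r [Ps [sigma [Hv [Hne [Hnd [Hps [Hpar [_ [_ [[Hu _] [_ [Et Eu]]]]]]]]]]]]]].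
  subst t u.
  eapply rst_trans; [apply rst_sym; apply fold_conv; auto|].
  - intros p [lp rp] Hin. destruct (Hps _ _ Hin) as [Hvp [f [ts Hf]]].
    exists (subst sigma (Fun f ts)). split.
    + apply subterm_subst; auto.
    + change (snd (lp, rp)) with rp. rewrite <- (Hu p lp rp (Fun f ts) Hin Hf). apply conv_subst, HR; auto.
  - apply conv_subst. apply HR; auto.
Qed.
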